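(* Let $K,T\subset\mathbb{R}^n$ be convex bodies, where $T$ is strictly convex and smooth, and let $q=(q_1,\dots,q_m)$ be a closed $(K,T)$-Minkowski billiard trajectory. Then for every $j\in\{1,\dots,m\}$ there is exactly one $K$-supporting hyperplane $H_j$ through $q_j$ such that $q_j$ minimizes $\bar q\mapsto\mu_{T^\circ}(\bar q-q_{j-1})+\mu_{T^\circ}(q_{j+1}-\bar q)$ over all $\bar q\in H_j$.
   Context: A convex body is a compact convex set in $\mathbb{R}^n$ containing the origin in its interior; it is smooth if through each boundary point there is a unique supporting hyperplane. For a convex body $T$, $T^\circ$ is its polar body and $\mu_{T^\circ}(x)=\min\{t\ge 0: x\in tT^\circ\}$. For a convex set $C$ and $z\in\partial C$, $N_C(z)=\{v:\langle v,y-z\rangle\le 0\ \forall y\in C\}$. A closed polygonal curve $(q_1,\dots,q_m)$, $m\ge2$, always satisfies $q_j\ne q_{j+1}$ and $q_j\notin[q_{j-1},q_{j+1}]$ (indices mod $m$). A closed polygonal curve $q$ with vertices on $\partial K$ is a closed $(K,T)$-Minkowski billiard trajectory if there are $p_1,\dots,p_m\in\partial T$ with $q_{j+1}-q_j\in N_T(p_j)$ and $p_{j+1}-p_j\in -N_K(q_{j+1})$ for all $j$. *)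

(* Defs.v *)
From HB Require Import structures.
From mathcomp Require Import all_boot all_order all_algebra.
From mathcomp Require Import all_classical all_reals all_analysis.
Set Implicit Arguments. Unset Strict Implicit. Unset Printing Implicit Defensive.
Import Order.TTheory GRing.Theory Num.Theory.
Import numFieldNormedType.Exports.
Local Open Scope classical_set_scope.
Local Open Scope ring_scope.

Section Defs.
Variables (R : realType) (n : nat).
Notation V := 'rV[R]_n.

Definition dotp (u v : V) : R := \sum_(i < n) u 0 i * v 0 i.

Definition convex_set (C : set V) : Prop :=
  forall x y t, C x -> C y -> 0 <= t <= 1 -> C (t *: x + (1 - t) *: y).

Definition convex_body (C : set V) : Prop :=
  [/\ convex_set C, compact C & (interior C) 0].

Definition bd (C : set V) : set V := closure C `\` interior C.

Definition strictly_convex (C : set V) : Prop :=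
  forall x y t, C x -> C y -> x != y -> 0 < t < 1 ->
    (interior C) (t *: x + (1 - t) *: y).

Definition supporting_hyperplane (C : set V) (z : V) (H : set V) : Prop :=
  exists v : V, [/\ v != 0, H = [set y | dotp v y = dotp v z]
                   & forall y, C y -> dotp v y <= dotp v z].

Definition smooth (C : set V) : Prop :=
  forall z, bd C z -> exists! H, supporting_hyperplane C z H.

Definition polar (C : set V) : set V :=
  [set y | forall x, C x -> dotp x y <= 1].

Definition scale_set (t : R) (C : set V) : set V := [set t *: y | y in C].

Definition gauge (C : set V) (x : V) : R :=
  inf [set t : R | 0 <= t /\ scale_set t C x].

Definition normal_cone (C : set V) (z : V) : set V :=
  [set v | forall y, C y -> dotp v (y - z) <= 0].

Definition in_segment (a b x : V) : Prop :=
  exists2 t : R, 0 <= t <= 1 & x = (1 - t) *: a + t *: b.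

(* closed polygonal curve (q_1,...,q_m), indices mod m *)
Definition closed_polygonal_curve (m : nat) (q : 'I_m -> V) : Prop :=
  (2 <= m)%N /\
  forall j : 'I_m, q j != q (ordS j) /\
                   ~ in_segment (q (ord_pred j)) (q (ordS j)) (q j).

Definition minkowski_billiard_trajectory (K T : set V) (m : nat)
    (q : 'I_m -> V) : Prop :=
  [/\ closed_polygonal_curve q,
      forall j, bd K (q j) &
      exists p : 'I_m -> V,
        (forall j, bd T (p j)) /\
        forall j : 'I_m,
          normal_cone T (p j) (q (ordS j) - q j) /\
          normal_cone K (q (ordS j)) (- (p (ordS j) - p j))].

End Defs.

(* Main.v *)
Require Import Defs.
From HB Require Import structures.
From mathcomp Require Import all_boot all_order all_algebra.
From mathcomp Require Import all_classical all_reals all_analysis.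
From mathcomp Require Import ring lra.
Import Order.TTheory GRing.Theory Num.Theory.
Import numFieldNormedType.Exports.
Local Open Scope classical_set_scope.
Local Open Scope ring_scope.

Section Aux.
Variables (R : realType) (n : nat).
Notation V := 'rV[R]_n.
Implicit Types (u v w : V).

Lemma dotpC u v : dotp u v = dotp v u.
Proof. by apply: eq_bigr => i _; rewrite mulrC. Qed.

Lemma dotpDl u v w : dotp (u + v) w = dotp u w + dotp v w.
Proof. by rewrite /dotp -big_split; apply: eq_bigr => i _; rewrite mxE mulrDl. Qed.

Lemma dotpZl (a : R) u w : dotp (a *: u) w = a * dotp u w.
Proof. by rewrite /dotp mulr_sumr; apply: eq_bigr => i _; rewrite mxE mulrA. Qed.

Lemma dotpNl u w : dotp (- u) w = - dotp u w.
Proof. by rewrite -scaleN1r dotpZl mulN1r. Qed.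

Lemma dotpBl u v w : dotp (u - v) w = dotp u w - dotp v w.
Proof. by rewrite dotpDl dotpNl. Qed.

Lemma dotpDr u v w : dotp w (u + v) = dotp w u + dotp w v.
Proof. by rewrite !(dotpC w) dotpDl. Qed.

Lemma dotpZr (a : R) u w : dotp w (a *: u) = a * dotp w u.
Proof. by rewrite !(dotpC w) dotpZl. Qed.

Lemma dotpNr u w : dotp w (- u) = - dotp w u.
Proof. by rewrite !(dotpC w) dotpNl. Qed.

Lemma dotpBr u v w : dotp w (u - v) = dotp w u - dotp w v.
Proof. by rewrite dotpDr dotpNr. Qed.

Lemma dotp0l w : dotp 0 w = 0.
Proof. by rewrite -(scale0r 0) dotpZl mul0r. Qed.

Lemma dotp0r w : dotp w 0 = 0.
Proof. by rewrite dotpC dotp0l. Qed.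

Lemma dotpp_ge0 u : 0 <= dotp u u.
Proof. by apply: sumr_ge0 => i _; rewrite -expr2 sqr_ge0. Qed.

Lemma dotpp_eq0 u : dotp u u = 0 -> u = 0.
Proof.
move=> /eqP; rewrite psumr_eq0; last by move=> i _; rewrite -expr2 sqr_ge0.
move=> /allP H; apply/rowP => i; rewrite mxE.
have := H i (mem_index_enum i); rewrite /= -expr2 sqrf_eq0 => /eqP.
by [].
Qed.

Lemma dotpp_gt0 u : u != 0 -> 0 < dotp u u.
Proof.
move=> u0; rewrite lt_def dotpp_ge0 andbT; apply/eqP => /dotpp_eq0 /eqP.
by rewrite (negbTE u0).
Qed.

Lemma coord_le_norm u i : `|u 0 i| <= `|u|.
Proof.
rewrite [leRHS]/Num.Def.normr /= mx_normrE; apply/bigmax_geP; right => /=.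
by exists (ord0, i) => //=; rewrite [0]ord1.
Qed.

Lemma dotp_bound u v : `|dotp u v| <= n%:R * (`|u| * `|v|).
Proof.
apply: (le_trans (ler_norm_sum _ _ _)).
have -> : n%:R * (`|u| * `|v|) = \sum_(i < n) (`|u| * `|v|).
  by rewrite sumr_const card_ord mulr_natl.
apply: ler_sum => i _; rewrite normrM.
by apply: ler_pM => //; apply: coord_le_norm.
Qed.

Lemma dotp_continuous u : continuous (dotp u).
Proof.
move=> x A /nbhs_ballP [e /= e0 eA]; apply/nbhs_ballP.
have K : 0 < n%:R * `|u| + 1 by apply: ltr_wpDl => //; apply: mulr_ge0.
exists (e / (n%:R * `|u| + 1)); first by apply: divr_gt0.
move=> y; rewrite -ball_normE /= => xy; apply: eA; rewrite -ball_normE /=.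
rewrite -dotpBr; apply: (le_lt_trans (dotp_bound _ _)).
rewrite mulrA; apply: (le_lt_trans (y := (n%:R * `|u| + 1) * `|x - y|)).
  by apply: ler_wpM2r => //; rewrite lerDl.
by rewrite mulrC -ltr_pdivlMr.
Qed.

Lemma interior_ball (C : set V) x : interior C x ->
  exists2 e : R, 0 < e & forall y, `|x - y| < e -> C y.
Proof.
move=> /nbhs_ballP [e /= e0 eA]; exists e => // y xy; apply: eA.
by rewrite -ball_normE.
Qed.

Lemma compact_bd (C : set V) : compact C ->
  exists2 M : R, 0 < M & forall y, C y -> `|y| < M.
Proof.
move=> cC; have /ex_strict_bound_gt0 [M M0 HM] := compact_bounded cC.
by exists M.
Qed.

Lemma dotp_ub (C : set V) z : compact C -> exists B, forall y, C y -> dotp z y <= B.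
Proof.
move=> /compact_bd [M M0 HM]; exists (n%:R * (`|z| * M)) => y Cy.
apply: (le_trans (ler_norm _)); apply: (le_trans (dotp_bound _ _)).
apply: ler_wpM2l => //; apply: ler_wpM2l => //; exact: ltW (HM _ Cy).
Qed.

Lemma bd_mem (C : set V) z : compact C -> bd C z -> C z.
Proof.
move=> cC [cz _]; have : closed C := compact_closed (@norm_hausdorff _ _) cC.
by move=> /closure_id ->.
Qed.

Lemma normal_pos (C : set V) p x : interior C 0 -> x != 0 ->
  (forall y, C y -> dotp x (y - p) <= 0) -> 0 < dotp x p.
Proof.
move=> /interior_ball [e e0 He] x0 Hn.
have nx : 0 < `|x| by rewrite normr_gt0.
pose s := e / (2 * `|x|).
have s0 : 0 < s by rewrite divr_gt0 // mulr_gt0.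
have Cy : C (s *: x).
  apply: He; rewrite sub0r normrN normrZ gtr0_norm // /s.
  have -> : e / (2 * `|x|) * `|x| = e / 2.
    by field; rewrite gt_eqF.
  lra.
have := Hn _ Cy; rewrite dotpBr dotpZr subr_le0 => H.
apply: lt_le_trans H; apply: mulr_gt0 => //; exact: dotpp_gt0.
Qed.

Definition gset (C : set V) x := [set t : R | 0 <= t /\ scale_set t (polar C) x].

Lemma gauge_lb (C : set V) x p : compact C -> C p -> dotp x p <= gauge (polar C) x.
Proof.
move=> cC Cp; have [B HB] := dotp_ub _ x cC.
apply: lb_le_inf.
  exists (`|B| + 1); split; first by apply: addr_ge0.
  exists ((`|B| + 1)^-1 *: x); last first.
    by rewrite scalerA mulfV ?scale1r // gt_eqF // ltr_pwDr.
  move=> y Cy; rewrite dotpZr dotpC ler_pdivrMl ?ltr_pwDr // mulr1.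
  by apply: (le_trans (HB _ Cy)); apply: (le_trans (ler_norm _)); rewrite lerDl.
move=> t [t0 [y Py <-]]; rewrite dotpZl dotpC.
by rewrite -[leRHS]mulr1; apply: ler_wpM2l => //; apply: Py.
Qed.

Lemma gauge_ub (C : set V) x s : 0 < s -> (forall y, C y -> dotp x y <= s) ->
  gauge (polar C) x <= s.
Proof.
move=> s0 Hs; apply: ge_inf.
  by exists 0 => t [].
split; first exact: ltW.
exists (s^-1 *: x); last by rewrite scalerA mulfV ?scale1r // gt_eqF.
move=> y Cy; rewrite dotpZr dotpC ler_pdivrMl // mulr1; exact: Hs.
Qed.

Lemma par_or_dir v w : w != 0 ->
  (exists c, v = c *: w) \/ (exists e, dotp w e = 0 /\ 0 < dotp v e).
Proof.
move=> w0; pose c := dotp w v / dotp w w.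
have ww : dotp w w != 0 by rewrite gt_eqF // dotpp_gt0.
pose e := v - c *: w.
have we : dotp w e = 0.
  by rewrite /e dotpBr dotpZr /c mulfVK // subrr.
have [e0|e0] := eqVneq e 0.
  by left; exists c; apply/eqP; rewrite -subr_eq0 -/e e0.
right; exists e; split => //.
have -> : v = e + c *: w by rewrite /e subrK.
by rewrite dotpDl dotpZl we mulr0 addr0 dotpp_gt0.
Qed.

Lemma max_unique (C : set V) x p y : strictly_convex C -> C p -> C y -> x != 0 ->
  (forall z, C z -> dotp x (z - p) <= 0) -> dotp x (y - p) = 0 -> y = p.
Proof.
move=> sC Cp Cy x0 Hn Hyp; apply/eqP; apply: contraT => yp.
have hm : 0 < (2^-1 : R) < 1 by apply/andP; split; lra.
have /interior_ball [e e0 He] := sC _ _ _ Cy Cp yp hm.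
set m := 2^-1 *: y + (1 - 2^-1) *: p in He.
have nx : 0 < `|x| by rewrite normr_gt0.
pose s := e / (2 * `|x|).
have s0 : 0 < s by rewrite divr_gt0 // mulr_gt0.
have Cz : C (m + s *: x).
  apply: He; rewrite opprD addrA subrr sub0r normrN normrZ gtr0_norm // /s.
  have -> : e / (2 * `|x|) * `|x| = e / 2.
    by field; rewrite gt_eqF.
  lra.
have := Hn _ Cz; rewrite !(dotpBr, dotpDr, dotpZr).
move: Hyp; rewrite dotpBr => Hyp.
have : 0 < s * dotp x x by rewrite mulr_gt0 // dotpp_gt0.
lra.
Qed.

Lemma key (C : set V) x p d eps : compact C -> interior C 0 -> strictly_convex C ->
  C p -> x != 0 -> (forall z, C z -> dotp x (z - p) <= 0) -> 0 < eps ->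
  exists2 t0 : R, 0 < t0 & forall t, 0 < t -> t <= t0 ->
    gauge (polar C) (x + t *: d) <= dotp x p + t * (dotp d p + eps).
Proof.
move=> cC iC sC Cp x0 Hn eps0.
have hpos := normal_pos _ _ _ iC x0 Hn.
have [B HB] := dotp_ub _ d cC.
have [del del0 Hdel] : exists2 del : R, 0 < del & forall y, C y ->
    dotp d p + eps <= dotp d y -> dotp x y <= dotp x p - del.
  pose D := C `&` (dotp d @^-1` [set r | dotp d p + eps <= r]).
  have [D0|D0] := pselect (D !=set0); last first.
    exists 1 => // y Cy Hy; exfalso; apply: D0; exists y; split => //.
  have cD : compact D.
    apply: compact_closedI => //; apply: preimage_closed; last exact: closed_ge.
    move=> z _; exact: dotp_continuous.
  have [c /set_mem [Cc Dc] Hc] := @compact_EVT_max _ _ (dotp x) D D0 cD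
    (@continuous_subspaceT _ _ D (dotp x) (@dotp_continuous x)).
  exists (dotp x p - dotp x c).
    rewrite subr_gt0 lt_def; apply/andP; split; last first.
      by have := Hn _ Cc; rewrite dotpBr subr_le0.
    apply/eqP => E; have cp : c = p.
      by apply: (max_unique _ _ _ _ sC Cp Cc x0 Hn); rewrite dotpBr E subrr.
    by move: Dc; rewrite /= cp; lra.
  move=> y Cy Hy; have := Hc y (mem_set (conj Cy Hy)); lra.
pose a := `|B - dotp d p| + 1.
pose b := `|dotp d p + eps| + 1.
have a0 : 0 < a by rewrite /a ltr_pwDr.
have b0 : 0 < b by rewrite /b ltr_pwDr.
exists (Num.min (del / a) (dotp x p / b)).
  by rewrite lt_min !divr_gt0.
move=> t t0; rewrite le_min => /andP [t1 t2].
have ta : t * a <= del by rewrite -ler_pdivlMr.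
have tb : t * b <= dotp x p by rewrite -ler_pdivlMr.
have na : B - dotp d p <= `|B - dotp d p| := ler_norm _.
have nb : - (dotp d p + eps) <= `|dotp d p + eps|.
  by rewrite -normrN ler_norm.
have ta' : t * (B - dotp d p) <= t * `|B - dotp d p| by rewrite ler_pM2l.
have tb' : t * (- (dotp d p + eps)) <= t * `|dotp d p + eps| by rewrite ler_pM2l.
apply: gauge_ub.
  move: tb tb'; rewrite /b; nra.
move=> y Cy; rewrite dotpDl dotpZl.
have Hxy : dotp x y <= dotp x p by have := Hn _ Cy; rewrite dotpBr subr_le0.
have [Hy|Hy] := leP (dotp d p + eps) (dotp d y).
  have := Hdel _ Cy Hy; have := HB _ Cy => HBy Hxy'.
  have : t * dotp d y <= t * B by rewrite ler_pM2l.
  move: ta ta'; rewrite /a; nra.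
have : t * dotp d y <= t * (dotp d p + eps) by rewrite ler_pM2l // ltW.
nra.
Qed.

Lemma smooth_par (C : set V) p x1 x2 : interior C 0 -> smooth C -> bd C p ->
  x1 != 0 -> x2 != 0 ->
  (forall z, C z -> dotp x1 (z - p) <= 0) -> (forall z, C z -> dotp x2 (z - p) <= 0) ->
  exists2 c : R, 0 < c & x2 = c *: x1.
Proof.
move=> iC sm bp n1 n2 N1 N2.
have S1 : supporting_hyperplane C p [set y | dotp x1 y = dotp x1 p].
  exists x1; split => // z Cz; have := N1 _ Cz; by rewrite dotpBr subr_le0.
have S2 : supporting_hyperplane C p [set y | dotp x2 y = dotp x2 p].
  exists x2; split => // z Cz; have := N2 _ Cz; by rewrite dotpBr subr_le0.
have [H [_ HU]] := sm _ bp.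
have E : [set y | dotp x1 y = dotp x1 p] = [set y | dotp x2 y = dotp x2 p].
  by rewrite -(HU _ S1) -(HU _ S2).
have [[c Ec]|[e [e1 e2]]] := par_or_dir x2 x1 n1.
  exists c => //.
  have h1 := normal_pos _ _ _ iC n1 N1.
  have h2 := normal_pos _ _ _ iC n2 N2.
  by move: h2; rewrite Ec dotpZl pmulr_lgt0.
have : [set y | dotp x1 y = dotp x1 p] (p + e) by rewrite /= dotpDr e1 addr0.
rewrite E /= dotpDr => e3.
have e4 : dotp x2 e = 0 by lra.
by move: e2; rewrite e4 ltxx.
Qed.

Lemma seg_contra (a b z : V) c : 0 < c -> b - z = c *: (z - a) -> in_segment a b z.
Proof.
move=> c0 E; exists (1 + c)^-1.
  apply/andP; split; first by rewrite invr_ge0 addr_ge0 // ltW.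
  by rewrite invf_le1 ?ltr_pwDr // lerDl ltW.
apply/rowP => i; have := congr1 (fun M : V => M 0 i) E; rewrite !mxE => Ei.
have -> : b 0 i = z 0 i + c * (z 0 i - a 0 i) by rewrite -Ei subrKC.
field; rewrite gt_eqF //; lra.
Qed.
End Aux.

Theorem proposition3p3 (R : realType) (n : nat) (K T : set 'rV[R]_n)
  (m : nat) (q : 'I_m -> 'rV[R]_n) :
  convex_body K -> convex_body T -> strictly_convex T -> smooth T ->
  minkowski_billiard_trajectory K T q ->
  forall j : 'I_m,
    exists! H : set 'rV[R]_n,
      supporting_hyperplane K (q j) H /\
      forall qb, H qb ->
        gauge (polar T) (q j - q (ord_pred j)) + gauge (polar T) (q (ordS j) - q j)
        <= gauge (polar T) (qb - q (ord_pred j)) + gauge (polar T) (q (ordS j) - qb).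
Proof.
move=> _ [_ cT iT] sT smT [[_ curve] bdK [p [bdT Hp]]] j.
set jm := ord_pred j; set jp := ordS j.
have Ejm : ordS jm = j by rewrite /jm ord_predK.
have HpT k : T (p k) := bd_mem _ _ _ _ cT (bdT k).
have N1 : forall z, T z -> dotp (q j - q jm) (z - p jm) <= 0.
  by have := (Hp jm).1; rewrite Ejm.
have N2 : forall z, T z -> dotp (q jp - q j) (z - p j) <= 0 := (Hp j).1.
have NK : forall z, K z -> dotp (- (p j - p jm)) (z - q j) <= 0.
  by have := (Hp jm).2; rewrite Ejm.
set x1 := q j - q jm in N1 *; set x2 := q jp - q j in N2 *.
have x10 : x1 != 0.
  by have := (curve jm).1; rewrite Ejm eq_sym -subr_eq0.
have x20 : x2 != 0 by have := (curve j).1; rewrite eq_sym -subr_eq0.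
set v := - (p j - p jm) in NK *.
have v0 : v != 0.
  apply/eqP => v0; have Epp : p j = p jm.
    by apply/eqP; rewrite -subr_eq0 -oppr_eq0 -/v v0.
  have N2' : forall z, T z -> dotp x2 (z - p jm) <= 0 by rewrite -Epp.
  have [c c0 Ec] := smooth_par _ _ _ _ _ _ iT smT (bdT jm) x10 x20 N1 N2'.
  apply: (curve j).2; exact: (@seg_contra _ _ _ _ _ c c0 Ec).
have h1 := normal_pos _ _ _ _ _ iT x10 N1.
have h2 := normal_pos _ _ _ _ _ iT x20 N2.
have g1 : gauge (polar T) x1 = dotp x1 (p jm).
  apply/eqP; rewrite eq_le gauge_lb // andbT; apply: gauge_ub => // y Ty.
  by have := N1 _ Ty; rewrite dotpBr subr_le0.
have g2 : gauge (polar T) x2 = dotp x2 (p j).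
  apply/eqP; rewrite eq_le gauge_lb // andbT; apply: gauge_ub => // y Ty.
  by have := N2 _ Ty; rewrite dotpBr subr_le0.
exists [set y | dotp v y = dotp v (q j)]; split.
  split.
    exists v; split => // z Kz; have := NK _ Kz; by rewrite dotpBr subr_le0.
  move=> qb /= Hqb; rewrite -/x1 -/x2 g1 g2.
  have L1 := gauge_lb _ _ _ (qb - q jm) _ cT (HpT jm).
  have L2 := gauge_lb _ _ _ (q jp - qb) _ cT (HpT j).
  move: Hqb L1 L2; rewrite /x1 /x2 /v !(dotpNl, dotpBl, dotpBr, dotpNr).
  rewrite ![dotp (p _) _]dotpC; lra.
move=> H' [[w [w0 H'eq _]] M'].
have [[c Ec]|[e [e1 e2]]] := @par_or_dir _ _ v w w0.
  have c0 : c != 0 by apply: contraNneq v0 => c0; rewrite Ec c0 scale0r.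
  rewrite H'eq; apply/seteqP; split => y /=; rewrite Ec !dotpZl.
    by move/(mulfI c0).
  by move=> ->.
exfalso.
pose eps := dotp v e / 4.
have eps0 : 0 < eps by rewrite /eps divr_gt0.
have [t1 t10 K1] := key _ _ _ _ _ (- e) _ cT iT sT (HpT jm) x10 N1 eps0.
have [t2 t20 K2] := key _ _ _ _ _ e _ cT iT sT (HpT j) x20 N2 eps0.
pose t := Num.min t1 t2.
have t0 : 0 < t by rewrite lt_min t10 t20.
have K1' := K1 t t0 (ltac:(by rewrite ge_min lexx)).
have K2' := K2 t t0 (ltac:(by rewrite ge_min lexx orbT)).
pose qb := q j + t *: (- e).
have Hqb : H' qb by rewrite H'eq /= /qb dotpDr dotpZr dotpNr e1 oppr0 mulr0 addr0.
have := M' _ Hqb.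
have -> : qb - q jm = x1 + t *: (- e) by rewrite /qb /x1 addrAC.
have -> : q jp - qb = x2 + t *: e.
  by rewrite /qb /x2 opprD scalerN opprK addrA.
rewrite -/x1 -/x2 g1 g2.
move: K1' K2'; rewrite /eps /v !(dotpNl, dotpBl, dotpBr, dotpNr) in e2 *.
have := mulr_gt0 t0 e2; rewrite ![dotp (p _) _]dotpC; nra.
Qed.
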